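(* Let $t^*$ maximize $u(t)$ over all tests $t\subseteq[n]$ with $|t|\le G$. Then for every $B\ge1$ and every testing regime $T\in\mathcal T^B$ (overlapping allowed), $u(T)\le B\cdot u(t^* )$.
   Context: Population $[n]$; individual $i$ is healthy with probability $q_i\in[0,1]$, independently, with utility $u_i\ge0$. For $S\subseteq[n]$, $q_S=\prod_{i\in S}q_i$. A test is a set $t\subseteq[n]$ with $|t|\le G$, negative iff all members are healthy; $u(t)=q_t\sum_{i\in t}u_i$. A testing regime is a tuple $T=(t_1,\dots,t_B)$ of tests; $\mathcal T^B$ is the set of all of them. Welfare $u(T)=\sum_iu_iP^T_i$, where $P^T_i$ is the probability that $i$ is in at least one negative test of $T$. *)

(* Defs.v *)
From mathcomp Require Import all_boot all_order all_algebra.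
Set Implicit Arguments. Unset Strict Implicit. Unset Printing Implicit Defensive.
Import Order.TTheory GRing.Theory Num.Theory.
Local Open Scope ring_scope.

Section GroupTesting.
Variables (R : realFieldType) (n : nat).
(* q i = probability that individual i is healthy; u i = utility of i *)
Variables (q u : 'I_n -> R).

Definition qS (S : {set 'I_n}) : R := \prod_(i in S) q i.

Definition test_util (t : {set 'I_n}) : R := qS t * \sum_(i in t) u i.

(* Health outcomes: w i = true iff individual i is healthy.
   Independent product distribution. *)
Definition outcome_prob (w : {ffun 'I_n -> bool}) : R :=
  \prod_i (if w i then q i else 1 - q i).

Definition negative (w : {ffun 'I_n -> bool}) (t : {set 'I_n}) : bool :=
  [forall j in t, w j].

Definition P_in_neg (B : nat) (T : B.-tuple {set 'I_n}) (i : 'I_n) : R :=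
  \sum_(w : {ffun 'I_n -> bool})
     (if [exists k : 'I_B, (i \in tnth T k) && negative w (tnth T k)]
      then outcome_prob w else 0).

Definition welfare (B : nat) (T : B.-tuple {set 'I_n}) : R :=
  \sum_i u i * P_in_neg T i.

End GroupTesting.

(* Main.v *)
Require Import Defs.
From mathcomp Require Import all_boot all_order all_algebra.
Import Order.TTheory GRing.Theory Num.Theory.
Local Open Scope ring_scope.

Lemma op_ge0 (R : realFieldType) (n : nat) (q : 'I_n -> R)
  (hq : forall i, 0 <= q i <= 1) w : 0 <= outcome_prob q w.
Proof.
rewrite /outcome_prob; apply: prodr_ge0 => i _.
have /andP[h0 h1] := hq i; case: (w i) => //; by rewrite subr_ge0.
Qed.

Lemma neg_sum (R : realFieldType) (n : nat) (q : 'I_n -> R) (t : {set 'I_n}) :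
  \sum_(w : {ffun 'I_n -> bool}) (if negative w t then outcome_prob q w else 0)
  = qS q t.
Proof.
pose F := fun (i : 'I_n) (b : bool) =>
  if b then q i else (if i \in t then 0 else 1 - q i).
have E : forall w : {ffun 'I_n -> bool},
  (if negative w t then outcome_prob q w else 0) = \prod_i F i (w i).
  move=> w; rewrite /negative /outcome_prob /F.
  case: forallP => [H|H].
    apply: eq_bigr => i _; case E1: (w i) => //.
    case Hi: (i \in t) => //; by move: (H i); rewrite Hi E1.
  have : ~~ [forall j in t, w j] by apply/forallP.
  rewrite negb_forall_in => /existsP[j /andP[jt wj]].
  by rewrite (bigD1 j) //= (negbTE wj) jt mul0r.
rewrite (eq_bigr _ (fun w _ => E w)).
rewrite -(bigA_distr_bigA (fun i b => F i b)).
rewrite /qS [RHS]big_mkcond /=; apply: eq_bigr => i _.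
rewrite big_bool /F /=; case: (i \in t); first by rewrite addr0.
by rewrite addrC subrK.
Qed.

Theorem mainTheorem9 (R : realFieldType) (n G : nat) (q u : 'I_n -> R)
  (hq : forall i, 0 <= q i <= 1) (hu : forall i, 0 <= u i)
  (tstar : {set 'I_n}) (htstar : (#|tstar| <= G)%N)
  (hmax : forall t : {set 'I_n}, (#|t| <= G)%N -> test_util q u t <= test_util q u tstar)
  (B : nat) (hB : (1 <= B)%N) (T : B.-tuple {set 'I_n})
  (hT : forall k : 'I_B, (#|tnth T k| <= G)%N) :
  welfare q u T <= B%:R * test_util q u tstar.
Proof.
have step1 : forall i, P_in_neg q T i <=
    \sum_(k < B) (if i \in tnth T k then qS q (tnth T k) else 0).
  move=> i; rewrite /P_in_neg.
  apply: (@le_trans _ _ (\sum_w \sum_(k < B)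
     (if (i \in tnth T k) && negative w (tnth T k) then outcome_prob q w else 0))).
    apply: ler_sum => w _.
    case: existsP => [[k Hk]|_]; last first.
      by apply: sumr_ge0 => k _; case: ifP => // _; apply: op_ge0.
    rewrite (bigD1 k) //= Hk lerDl.
    by apply: sumr_ge0 => k' _; case: ifP => // _; apply: op_ge0.
  rewrite exchange_big /=; apply: ler_sum => k _.
  case: (i \in tnth T k) => /=; first by rewrite neg_sum.
  by rewrite big1.
rewrite /welfare.
apply: (@le_trans _ _ (\sum_i u i *
    \sum_(k < B) (if i \in tnth T k then qS q (tnth T k) else 0))).
  by apply: ler_sum => i _; apply: ler_wpM2l => //; apply: step1.
under eq_bigr => i _ do rewrite mulr_sumr.
rewrite exchange_big /=.
apply: (@le_trans _ _ (\sum_(k < B) test_util q u tstar)); last first.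
  by rewrite sumr_const card_ord mulr_natl.
apply: ler_sum => k _.
apply: le_trans (hmax _ (hT k)).
rewrite /test_util mulr_sumr [X in _ <= X]big_mkcond /=.
rewrite le_eqVlt; apply/orP; left; apply/eqP/eq_bigr => i _; case: ifP => _; first by rewrite mulrC.
by rewrite mulr0.
Qed.
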